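(* For all $\Sigma\in\mathcal{P}(\mathit{State})$, $$\alpha^{\mathsf{v}}(\Sigma)=\bigsqcup\big\{\langle\{\langle\ell,\langle s,h|_{\mathrm{rng}(s)}\rangle\rangle\},\; h|_{\mathit{Addr}\setminus\mathrm{rng}(s)}\rangle \;\big|\; \langle\ell,\langle s,h\rangle\rangle\in\Sigma\big\},$$ where $h|_X$ denotes the restriction of $h$ to $X$ (the second component viewed as a set of pairs $\langle a,h(a)\rangle$) and $\bigsqcup$ is the join in $\mathcal{A}^{\mathsf{v}}$. Moreover, $\alpha^{\mathsf{v}}(\top)=\top$.
   Context: Setting (heap programs): $\mathit{Var}=\mathit{Var}_p\uplus\mathit{Var}_d$ are pointer/data program variables, $\mathit{Fld}=\mathit{Fld}_p\uplus\mathit{Fld}_d$ pointer/data fields, $\mathit{Addr}$ a set of addresses containing $\mathsf{null}$, $\mathit{Val}=\mathit{Addr}\uplus\mathbb{Z}$, $\mathit{Loc}$ a finite set of control locations. A stack $s:\mathit{Var}\to\mathit{Val}$ is safe if $s(\mathit{Var}_p)\subseteq\mathit{Addr}$ and $s(\mathit{Var}_d)\subseteq\mathbb{Z}$. A heap is a partial map $h:\mathit{Addr}\rightharpoonup\mathit{FldVal}$ with $\mathit{FldVal}=(\mathit{Fld}\uplus\{\mathsf{free}\})\to\mathit{Val}$; it is safe if for all $a\in\mathrm{dom}(h)$, $h(a)(\mathit{Fld}_p)\subseteq\mathit{Addr}\cap\mathrm{dom}(h)$ and $h(a)(\mathit{Fld}_d\uplus\{\mathsf{free}\})\subseteq\mathbb{Z}$;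 $\mathit{Heap}$ is the set of safe heaps. A state is $\langle\ell,\langle s,h\rangle\rangle$ with $\ell\in\mathit{Loc}$, $s$ a safe stack, $h$ a safe heap and $\mathrm{rng}(s)\cap\mathit{Addr}\subseteq\mathrm{dom}(h)$; $\mathit{State}$ is the set of states. The concrete domain is $\mathcal{C}=\mathcal{P}(\mathit{State})\cup\{\top\}$ ordered by $X\sqsubseteq Y$ iff ($X,Y$ are sets and $X\subseteq Y$) or $Y=\top$. View abstraction: the view states are $\mathit{State}^{\mathsf{v}}=\mathit{Loc}\times\{\top\}\cup\{\langle\ell,\langle s,h\rangle\rangle \mid \mathrm{dom}(h)=s(\mathit{Var}_p)\}$ (the view heap $h$ may point outside its domain, so need not be safe). The abstract domain is $\mathcal{A}^{\mathsf{v}}=(\mathcal{P}(\mathit{State}^{\mathsf{v}})\times\mathcal{P}(\mathit{Addr}\times\mathit{FldVal}))\cup\{\top\}$, ordered by componentwise subset inclusion with $\top$ as top element; it is a complete lattice. For a view heap $h$ and $H\subseteq\mathit{Addr}\times\mathit{FldVal}$ (the space invariant), the completion $H\triangleright h$ is the set of safe heaps $h'$ with $h'=h\uplus h''$ for some $h''\in\mathit{Heap}$ whose graph is contained in $H$. The concretization is $\gamma^{\mathsf{v}}(\Sigma,H)=\{\langle\ell,\langle s,h'\rangle\rangle \mid \langle\ell,\langle s,h\rangle\rangle\in\Sigma \wedge h'\in H\triangleright h\}$ and $\gamma^{\mathsf{v}}(\top)=\top$. The abstraction $\alpha^{\mathsf{v}}:\mathcal{C}\to\mathcal{A}^{\mathsf{v}}$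 is defined as $\alpha^{\mathsf{v}}(\Sigma)=$ the greatest lower bound (meet) in $\mathcal{A}^{\mathsf{v}}$ of the set $\{V\in\mathcal{A}^{\mathsf{v}} \mid \Sigma\sqsubseteq\gamma^{\mathsf{v}}(V)\}$. *)

(* Defs.v *)
From Stdlib Require Import ZArith ClassicalDescription.

Section ViewAbstraction.
Context {VarP VarD FldP FldD Addr Loc : Type}.

Definition Var : Type := (VarP + VarD)%type.
Definition Fld : Type := (FldP + FldD)%type.
Definition Val : Type := (Addr + Z)%type.
(* FldVal = (Fld ⊎ {free}) -> Val ; the extra point [inr tt] is "free" *)
Definition FldVal : Type := (Fld + unit)%type -> Val.
Definition Stack : Type := Var -> Val.
Definition Heap : Type := Addr -> option FldVal.

Definition dom (h : Heap) (a : Addr) : Prop := exists v, h a = Some v.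
Definition rng (s : Stack) (a : Addr) : Prop := exists x, s x = inl a.

Definition safe_stack (s : Stack) : Prop :=
  (forall x : VarP, exists a, s (inl x) = inl a) /\
  (forall x : VarD, exists z, s (inr x) = inr z).

Definition safe_heap (h : Heap) : Prop :=
  forall a v, h a = Some v ->
    (forall f : FldP, exists b, v (inl (inl f)) = inl b /\ dom h b) /\
    (forall f : FldD, exists z, v (inl (inr f)) = inr z) /\
    (exists z, v (inr tt) = inr z).

Definition RState : Type := (Loc * (Stack * Heap))%type.
Definition is_state (st : RState) : Prop :=
  match st with
  | (l, (s, h)) => safe_stack s /\ safe_heap h /\ (forall a, rng s a -> dom h a)
  end.

(* raw view states: [None] is ⊤ in Loc × {⊤} *)
Definition RVState : Type := (Loc * option (Stack * Heap))%type.
Definition is_vstate (v : RVState) : Prop :=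
  match v with
  | (_, None) => True
  | (_, Some (s, h)) => forall a, dom h a <-> exists x : VarP, s (inl x) = inl a
  end.

(* concrete domain C = P(State) ∪ {⊤}; [None] is ⊤ *)
Definition CDom : Type := option (RState -> Prop).
Definition wfC (X : CDom) : Prop :=
  match X with None => True | Some Sv => forall st, Sv st -> is_state st end.
Definition leC (X Y : CDom) : Prop :=
  match Y with
  | None => True
  | Some y => match X with None => False | Some x => forall st, x st -> y st end
  end.

(* abstract domain A^v = (P(State^v) × P(Addr × FldVal)) ∪ {⊤}; [None] is ⊤ *)
Definition AV : Type := option ((RVState -> Prop) * (Addr * FldVal -> Prop)).
Definition wfAV (V : AV) : Prop :=
  match V with None => True | Some (Sv, _) => forall v, Sv v -> is_vstate v end.

Definition meetA (F : AV -> Prop) : AV :=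
  if excluded_middle_informative (exists Sv H, F (Some (Sv, H))) then
    Some (fun v => forall Sv H, F (Some (Sv, H)) -> Sv v,
          fun p => forall Sv H, F (Some (Sv, H)) -> H p)
  else None.

Definition joinA (F : AV -> Prop) : AV :=
  if excluded_middle_informative (F None) then None
  else Some (fun v => exists Sv H, F (Some (Sv, H)) /\ Sv v,
             fun p => exists Sv H, F (Some (Sv, H)) /\ H p).

Definition heap_union (h1 h2 h : Heap) : Prop :=
  (forall a, dom h1 a -> ~ dom h2 a) /\
  (forall a, h a = match h1 a with Some v => Some v | None => h2 a end).

Definition graph (h : Heap) (p : Addr * FldVal) : Prop := h (fst p) = Some (snd p).

Definition completion (H : Addr * FldVal -> Prop) (h h' : Heap) : Prop :=
  safe_heap h' /\
  exists h'' : Heap, (forall p, graph h'' p -> H p) /\ heap_union h h'' h'.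

Definition gammaV (V : AV) : CDom :=
  match V with
  | None => None
  | Some (Sv, H) =>
      Some (fun st => match st with
                      | (l, (s, h')) => is_state (l, (s, h')) /\
                          exists h, Sv (l, Some (s, h)) /\ completion H h h'
                      end)
  end.

Definition alphaV (X : CDom) : AV :=
  meetA (fun V => wfAV V /\ leC X (gammaV V)).

Definition restr (h : Heap) (X : Addr -> Prop) : Heap :=
  fun a => if excluded_middle_informative (X a) then h a else None.

End ViewAbstraction.

(* Main.v *)
Require Import Defs.
From Stdlib Require Import ZArith ClassicalDescription.
From Stdlib Require Import FunctionalExtensionality PropExtensionality.

Lemma rng_iff {VarP VarD Addr : Type} (s : @Stack VarP VarD Addr) (a : Addr) :
  safe_stack s -> (rng s a <-> exists x : VarP, s (inl x) = inl a).
Proof.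
  intros [_ Hd]; split.
  - intros [[x|x] Hx]; [eauto|]. destruct (Hd x) as [z Hz]; congruence.
  - intros [x Hx]; exists (inl x); exact Hx.
Qed.

Lemma restr_eq {VarP VarD FldP FldD Addr : Type} (s : @Stack VarP VarD Addr)
  (h h1 h2 : @Heap FldP FldD Addr) :
  safe_stack s -> (forall a, dom h1 a <-> exists x : VarP, s (inl x) = inl a) ->
  heap_union h1 h2 h -> h1 = restr h (rng s).
Proof.
  intros Hs Hd [_ Hu]. apply functional_extensionality; intro a.
  unfold restr. destruct (excluded_middle_informative (rng s a)) as [r|r].
  - rewrite Hu. destruct (h1 a) eqn:E; auto. exfalso.
    destruct (proj2 (Hd a) (proj1 (rng_iff s a Hs) r)) as [v Hv]; congruence.
  - destruct (h1 a) eqn:E; auto. exfalso; apply r. apply (rng_iff s a Hs).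
    apply Hd. eexists; eauto.
Qed.

Theorem lemma4p2 (VarP VarD FldP FldD Addr Loc : Type) (null : Addr) :
  (forall Sigma : @RState VarP VarD FldP FldD Addr Loc -> Prop,
     wfC (Some Sigma) ->
     alphaV (Some Sigma) =
     joinA (fun V => exists l s h, Sigma (l, (s, h)) /\
              V = Some (eq (l, Some (s, restr h (rng s))),
                        graph (restr h (fun a => ~ rng s a))))) /\
  @alphaV VarP VarD FldP FldD Addr Loc None = None.
Proof.
  split.
  - intros Sigma wf.
    set (Sv0 := fun v : @RVState VarP VarD FldP FldD Addr Loc =>
                  exists l s h, Sigma (l, (s, h)) /\ (l, Some (s, restr h (rng s))) = v).
    set (H0 := fun p : Addr * @FldVal FldP FldD Addr =>
                  exists l s h, Sigma (l, (s, h)) /\ graph (restr h (fun a => ~ rng s a)) p).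
    assert (HJ : joinA (fun V => exists l s h, Sigma (l, (s, h)) /\
              V = Some (eq (l, Some (s, restr h (rng s))),
                        graph (restr h (fun a => ~ rng s a)))) = Some (Sv0, H0)).
    { unfold joinA. destruct excluded_middle_informative as [[l [s [h [_ E]]]]|_].
      { discriminate. }
      f_equal; f_equal; apply functional_extensionality; intro x;
        apply propositional_extensionality; split.
      - intros [Sv [H [[l [s [h [Hs E]]]] Hx]]]. injection E; intros; subst.
        exists l, s, h; auto.
      - intros [l [s [h [Hs E]]]]. do 2 eexists; split; [exists l, s, h; split; [exact Hs|reflexivity]|exact E].
      - intros [Sv [H [[l [s [h [Hs E]]]] Hx]]]. injection E; intros; subst.
        exists l, s, h; auto.
      - intros [l [s [h [Hs E]]]]. do 2 eexists; split; [exists l, s, h; split; [exact Hs|reflexivity]|exact E]. }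
    assert (Hin : wfAV (Some (Sv0, H0)) /\ leC (Some Sigma) (gammaV (Some (Sv0, H0)))).
    { split.
      - intros v [l [s [h [Hs E]]]]; subst v. simpl. intro a.
        destruct (wf _ Hs) as [Ss [Sh Sd]].
        rewrite <- (rng_iff s a Ss). unfold dom, restr.
        destruct (excluded_middle_informative (rng s a)) as [r|r]; split; intro H.
        + exact r.
        + apply Sd; exact r.
        + destruct H; discriminate.
        + contradiction.
      - intros [l [s h]] Hs. pose proof (wf _ Hs) as Hst. split; [exact Hst|].
        destruct Hst as [Ss [Sh Sd]].
        exists (restr h (rng s)). split; [exists l, s, h; auto|].
        split; [exact Sh|]. exists (restr h (fun a => ~ rng s a)). split.
        + intros p Hp. exists l, s, h; auto.
        + split.
          * intros a [v Hv] [w Hw]. unfold restr in Hv, Hw.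
            destruct (excluded_middle_informative (rng s a));
            destruct (excluded_middle_informative (~ rng s a)); try discriminate; contradiction.
          * intro a. unfold restr.
            destruct (excluded_middle_informative (rng s a)) as [r|r].
            -- destruct (h a); [reflexivity|].
               destruct (excluded_middle_informative (~ rng s a)); [contradiction|reflexivity].
            -- destruct (excluded_middle_informative (~ rng s a)); [auto|contradiction]. }
    assert (Hlow : forall Sv H, wfAV (Some (Sv, H)) /\ leC (Some Sigma) (gammaV (Some (Sv, H))) ->
              (forall v, Sv0 v -> Sv v) /\ (forall p, H0 p -> H p)).
    { intros Sv H [Hw Hl]. simpl in Hw, Hl. split.
      - intros v [l [s [h [Hs E]]]]; subst v.
        destruct (Hl _ Hs) as [[Ss _] [h1 [Hsv [_ [h2 [_ Hu]]]]]].
        rewrite <- (restr_eq s h h1 h2 Ss (Hw _ Hsv) Hu). exact Hsv.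
      - intros p [l [s [h [Hs Hp]]]].
        destruct (Hl _ Hs) as [[Ss _] [h1 [Hsv [_ [h2 [Hg Hu]]]]]].
        pose proof (restr_eq s h h1 h2 Ss (Hw _ Hsv) Hu) as E. subst h1.
        apply Hg. unfold graph in *. destruct Hu as [_ Hu].
        unfold restr in Hp. destruct (excluded_middle_informative (~ rng s (fst p))) as [nr|]; [|discriminate].
        rewrite Hu in Hp. unfold restr in Hp.
        destruct (excluded_middle_informative (rng s (fst p))); [contradiction|exact Hp]. }
    rewrite HJ. unfold alphaV, meetA.
    destruct excluded_middle_informative as [_|n]; [|exfalso; apply n; exists Sv0, H0; exact Hin].
    f_equal; f_equal; apply functional_extensionality; intro x;
      apply propositional_extensionality; split.
    + intro Hx. exact (Hx _ _ Hin).
    + intros Hx Sv H HF. exact (proj1 (Hlow _ _ HF) x Hx).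
    + intro Hx. exact (Hx _ _ Hin).
    + intros Hx Sv H HF. exact (proj2 (Hlow _ _ HF) x Hx).
  - unfold alphaV, meetA. destruct excluded_middle_informative as [[Sv [H [_ F]]]|]; [|reflexivity].
    simpl in F. contradiction.
Qed.
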